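(* Let $V$ be an $n$-dimensional Euclidean space, $1\le p\le n$, let $\theta$ be a quadratic form on $V$ and $\tau=\tau_i\omega^i\in V^*$ a $1$-form such that $\theta-\tau\otimes\tau$ is $p$-positive semi-definite. Then for every $(p-1)$-form $\xi$ on $V$ one has $\tau\wedge\xi\in\mathrm{Im}F_\theta$ (with $F_\theta$ acting on $p$-forms), and for every $p$-form $f\in\mathrm{Im}F_\theta$, $$\langle F_\theta^{-1}f,\tau\wedge\xi\rangle\le\langle F_\theta^{-1}f,f\rangle^{1/2}|\xi| .$$ In particular $\langle F_\theta^{-1}(\tau\wedge\xi),\tau\wedge\xi\rangle\le|\xi|^2$.
   Context: Let $e_1,\dots,e_n$ be an orthonormal basis of $V$ with dual basis $\omega^1,\dots,\omega^n$; summation over repeated indices. A quadratic form (symmetric bilinear form) $\theta=\theta_{ij}\omega^i\otimes\omega^j$ is called $p$-positive definite (resp. $p$-positive semi-definite) if the sum of any $p$ of the eigenvalues of the symmetric matrix $(\theta_{ij})$ (counted with multiplicity) is positive (resp. nonnegative). For such $\theta$, $F_\theta$ denotes the self-adjoint operator on $p$-forms $F_\theta g=\theta_{jk}\,\omega^k\wedge(e_j\lrcorner g)$, where $\lrcorner$ is interior product. For a self-adjoint operator $F$ on $\Lambda^pV^*$ one has $\Lambda^pV^*=\ker F\oplus\mathrm{Im}F$, and $F^{-1}$ denotes $(F|_{\mathrm{Im}F})^{-1}:\mathrm{Im}F\to\mathrm{Im}F$ ($F$ need not be invertible). *)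

(* Defs.v *)
(* Exterior algebra of V = R^n (standard orthonormal basis),
   coefficients w.r.t. the basis omega^S = omega^{s1} /\ ... /\ omega^{sk},
   s1 < ... < sk, indexed by subsets S of 'I_n. *)
From HB Require Import structures.
From mathcomp Require Import all_boot all_order all_algebra.
Set Implicit Arguments. Unset Strict Implicit. Unset Printing Implicit Defensive.
Import Order.TTheory GRing.Theory Num.Theory.
Local Open Scope ring_scope.

Definition extform (R : rcfType) (n : nat) := {ffun {set 'I_n} -> R}.

Definition is_pform (R : rcfType) (n p : nat) (f : extform R n) : Prop :=
  forall S : {set 'I_n}, #|S| != p -> f S = 0.

Definition sgn_before (R : rcfType) (n : nat) (S : {set 'I_n}) (k : 'I_n) : R :=
  (-1) ^+ #|[set i in S | (i < k)%N]|.

Definition wedge1 (R : rcfType) (n : nat) (k : 'I_n) (g : extform R n) : extform R n :=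
  [ffun S : {set 'I_n} => if k \in S then sgn_before R S k * g (S :\ k) else 0].

Definition interior (R : rcfType) (n : nat) (j : 'I_n) (g : extform R n) : extform R n :=
  [ffun S : {set 'I_n} => if j \in S then 0 else sgn_before R S j * g (j |: S)].

Definition wedge_tau (R : rcfType) (n : nat) (tau : 'rV[R]_n) (g : extform R n)
  : extform R n :=
  [ffun S : {set 'I_n} => \sum_(k < n) tau 0 k * wedge1 k g S].

Definition Ftheta (R : rcfType) (n : nat) (A : 'M[R]_n) (g : extform R n) : extform R n :=
  [ffun S : {set 'I_n} => \sum_(j < n) \sum_(k < n) A j k * wedge1 k (interior j g) S].

Definition inner (R : rcfType) (n : nat) (f g : extform R n) : R :=
  \sum_(S : {set 'I_n}) f S * g S.

Definition fnorm (R : rcfType) (n : nat) (f : extform R n) : R :=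
  Num.sqrt (inner f f).

Definition in_ImF (R : rcfType) (n p : nat) (A : 'M[R]_n) (f : extform R n) : Prop :=
  is_pform p f /\ exists g : extform R n, is_pform p g /\ Ftheta A g = f.

Definition eigenvalue_list (R : rcfType) (n : nat) (A : 'M[R]_n)
  (t : 'I_n -> R) : Prop :=
  char_poly A = \prod_(i < n) ('X - (t i)%:P).

Definition p_psd (R : rcfType) (n p : nat) (A : 'M[R]_n) : Prop :=
  A^T = A /\
  forall t : 'I_n -> R, eigenvalue_list A t ->
  forall I : {set 'I_n}, #|I| = p -> 0 <= \sum_(i in I) t i.

(* Main.v *)
Require Import Defs.
From HB Require Import structures.
From mathcomp Require Import all_boot all_order all_algebra.
From mathcomp Require Import ring lra.
From mathcomp Require Import sesquilinear spectral.
From mathcomp.real_closed Require Import complex.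
Import Order.TTheory GRing.Theory Num.Theory.
Local Open Scope ring_scope.
Set Implicit Arguments. Unset Strict Implicit. Unset Printing Implicit Defensive.


Section Comb.
Variables (R : rcfType) (n : nat).
Local Notation form := (extform R n).
Local Notation sgn := (@sgn_before R n).

Lemma sgn_sq (S : {set 'I_n}) k : sgn S k * sgn S k = 1.
Proof. by rewrite /sgn_before -exprD addnn -mul2n exprM sqrrN !expr1n. Qed.

Lemma cnt_U1 (S : {set 'I_n}) (j k : 'I_n) : j \notin S ->
  #|[set i in j |: S | (i < k)%N]| = ((j < k)%N + #|[set i in S | (i < k)%N]|)%N.
Proof.
move=> jS; case: (ltnP j k) => hjk.
  have -> : [set i in j |: S | (i < k)%N] = j |: [set i in S | (i < k)%N].
    by apply/setP => i; rewrite !inE; case: (eqVneq i j) => [->|] //=.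
  by rewrite cardsU1 inE (negbTE jS).
have -> : [set i in j |: S | (i < k)%N] = [set i in S | (i < k)%N].
  apply/setP => i; rewrite !inE; case: (eqVneq i j) => [->|] //=.
  by rewrite (negbTE jS) ltnNge hjk.
by [].
Qed.

Lemma sgnU1 (S : {set 'I_n}) (j k : 'I_n) : j \notin S ->
  sgn (j |: S) k = (-1) ^+ (j < k)%N * sgn S k.
Proof. by move=> jS; rewrite /sgn_before cnt_U1 // exprD. Qed.

Lemma sgnD1 (S : {set 'I_n}) (j k : 'I_n) : j \in S ->
  sgn S k = (-1) ^+ (j < k)%N * sgn (S :\ j) k.
Proof.
by move=> jS; rewrite -{1}(setD1K jS) sgnU1 // setD11.
Qed.

Lemma sgnU1_self (S : {set 'I_n}) k : sgn (k |: S) k = sgn S k.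
Proof.
rewrite /sgn_before; suff -> : [set i in k |: S | (i < k)%N] = [set i in S | (i < k)%N] by [].
apply/setP => i; rewrite !inE.
by case: (eqVneq i k) => [->|] //=; rewrite ltnn !andbF.
Qed.

Lemma sgnD1_self (S : {set 'I_n}) k : sgn (S :\ k) k = sgn S k.
Proof.
rewrite /sgn_before; suff -> : [set i in S :\ k | (i < k)%N] = [set i in S | (i < k)%N] by [].
apply/setP => i; rewrite !inE.
by case: (eqVneq i k) => [->|] //=; rewrite ltnn !andbF.
Qed.

Lemma inner_sym (f g : form) : inner f g = inner g f.
Proof. by apply: eq_bigr => S _; rewrite mulrC. Qed.

Definition tog (k : 'I_n) (S : {set 'I_n}) := if k \in S then S :\ k else k |: S.

Lemma togK k : involutive (tog k).
Proof.
move=> S; rewrite /tog; case: (boolP (k \in S)) => kS.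
  by rewrite setD11 setD1K.
by rewrite setU11 setU1K.
Qed.

Lemma adjoint k (g h : form) : inner (wedge1 k g) h = inner g (interior k h).
Proof.
rewrite /inner (reindex_inj (inv_inj (togK k))) /=.
apply: eq_bigr => S _; rewrite !ffunE /tog.
case: (boolP (k \in S)) => kS; first by rewrite setD11 !mul0r mulr0.
rewrite setU11 setU1K // sgnU1_self; by rewrite mulrCA mulrA.
Qed.

Lemma adjoint' k (g h : form) : inner h (wedge1 k g) = inner (interior k h) g.
Proof. by rewrite inner_sym adjoint inner_sym. Qed.

Lemma anticomm j k (g : form) S :
  wedge1 k (interior j g) S + interior j (wedge1 k g) S =
  if j == k then g S else 0.
Proof.
rewrite !ffunE; case: (eqVneq j k) => [<-|jk].
  case: (boolP (j \in S)) => jS.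
    rewrite setD11 setD1K // sgnD1_self mulrA sgn_sq mul1r addr0 //.
  by rewrite setU11 setU1K // sgnU1_self mulrA sgn_sq mul1r add0r.
rewrite in_setD1 in_setU1 (negbTE jk) /= (eq_sym k j) (negbTE jk) /=.
case: (boolP (k \in S)) => kS /=; last first.
  by rewrite mulr0 if_same add0r.
case: (boolP (j \in S)) => jS /=; first by rewrite mulr0 addr0.
have -> : (j |: S) :\ k = j |: (S :\ k).
  apply/setP => i; rewrite !inE; case: (eqVneq i j) => [->|] //=.
  by rewrite jk.
rewrite (@sgnD1 S k j kS) (@sgnU1 S j k jS).
set a := sgn S k; set b := sgn (S :\ k) j; set x := g _.
have h : (-1) ^+ (k < j)%N * (-1) ^+ (j < k)%N = -1 :> R.
  case: (ltngtP k j) => h //=; rewrite ?mulr1 ?mul1r //.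
  by rewrite (val_inj h) eqxx in jk.
transitivity (a * b * x * (1 + (-1) ^+ (k < j)%N * (-1) ^+ (j < k)%N)).
  by ring.
by rewrite h subrr mulr0.
Qed.

Definition iota_v (a : 'I_n -> R) (g : form) : form :=
  [ffun S => \sum_(j < n) a j * interior j g S].
Definition wedge_v (a : 'I_n -> R) (g : form) : form :=
  [ffun S => \sum_(k < n) a k * wedge1 k g S].

Lemma inner_F (A : 'M[R]_n) (h g : form) :
  inner h (Ftheta A g) =
  \sum_(j < n) \sum_(k < n) A j k * inner (interior k h) (interior j g).
Proof.
rewrite /inner; under eq_bigr do rewrite ffunE big_distrr.
rewrite exchange_big; apply: eq_bigr => j _.
under eq_bigr do rewrite big_distrr.
rewrite exchange_big; apply: eq_bigr => k _.
transitivity (A j k * inner h (wedge1 k (interior j g))).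
  by rewrite /inner big_distrr; apply: eq_bigr => S _ /=; rewrite mulrCA.
by rewrite adjoint'.
Qed.

Lemma inner_wedge_v (a : 'I_n -> R) (h g : form) :
  inner h (wedge_v a g) = inner (iota_v a h) g.
Proof.
rewrite /inner; under eq_bigr do rewrite ffunE big_distrr.
rewrite exchange_big.
under [RHS]eq_bigr do rewrite ffunE big_distrl.
rewrite [RHS]exchange_big; apply: eq_bigr => k _.
transitivity (a k * inner h (wedge1 k g)).
  by rewrite /inner big_distrr; apply: eq_bigr => S _ /=; rewrite mulrCA.
rewrite adjoint' /inner big_distrr; apply: eq_bigr => S _ /=; by rewrite mulrA.
Qed.

Lemma inner_iota_v (a : 'I_n -> R) (g : form) :
  inner (iota_v a g) (iota_v a g) =
  \sum_(j < n) \sum_(k < n) (a j * a k) * inner (interior k g) (interior j g).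
Proof.
rewrite /inner; under eq_bigr do rewrite !ffunE big_distrl.
rewrite exchange_big; apply: eq_bigr => j _.
under eq_bigr do rewrite big_distrr.
rewrite exchange_big; apply: eq_bigr => k _.
rewrite big_distrr; apply: eq_bigr => S _ /=; ring.
Qed.

Lemma inner_F_split (th : 'M[R]_n) (tau : 'rV[R]_n) (g : form) :
  inner g (Ftheta th g) =
  inner g (Ftheta (th - tau^T *m tau) g) + inner (iota_v (tau 0) g) (iota_v (tau 0) g).
Proof.
rewrite !inner_F inner_iota_v -big_split; apply: eq_bigr => j _.
rewrite -big_split; apply: eq_bigr => k _.
rewrite !mxE big_ord1 !mxE /=; ring.
Qed.

Definition projp (p : nat) (g : form) : form :=
  [ffun S : {set 'I_n} => if #|S| == p then g S else 0].

Lemma projp_id p g : is_pform p g -> projp p g = g.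
Proof.
move=> hg; apply/ffunP => S; rewrite ffunE; case: eqP => // /eqP h.
by rewrite hg.
Qed.

Lemma projp_pform p g : is_pform p (projp p g).
Proof. by move=> S /negbTE h; rewrite ffunE h. Qed.

Lemma card_swap (S : {set 'I_n}) j k : k \in S -> j \notin S :\ k ->
  #|j |: (S :\ k)| = #|S|.
Proof. by move=> kS jS; rewrite cardsU1 jS (cardsD1 k S) kS. Qed.

Lemma wi_proj p j k g S :
  wedge1 k (interior j (projp p g)) S =
  if #|S| == p then wedge1 k (interior j g) S else 0.
Proof.
rewrite !ffunE; case: (boolP (k \in S)) => kS; last by rewrite if_same.
case: (boolP (j \in S :\ k)) => jS; first by rewrite mulr0 if_same.
by rewrite card_swap //; case: ifP => _; rewrite ?mulr0.
Qed.

Lemma F_proj p A g : Ftheta A (projp p g) = projp p (Ftheta A g).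
Proof.
apply/ffunP => S; rewrite !ffunE; under eq_bigr do under eq_bigr do rewrite wi_proj.
case: ifP => _ //.
by rewrite big1 // => j _; rewrite big1 // => k _; rewrite mulr0.
Qed.

Lemma F_pform p A (g : form) : is_pform p g -> is_pform p (Ftheta A g).
Proof. by move=> /projp_id <-; rewrite F_proj; apply: projp_pform. Qed.

Lemma wedge_pform p a (xi : form) : (1 <= p)%N -> is_pform p.-1 xi -> is_pform p (wedge_v a xi).
Proof.
move=> hp hxi S hS; rewrite ffunE big1 // => k _; rewrite ffunE.
case: ifP => kS; last by rewrite mulr0.
rewrite hxi ?mulr0 ?mulr0 //.
move: hS; rewrite (cardsD1 k S) kS; apply: contra => /eqP ->.
by rewrite add1n prednK.
Qed.
End Comb.

Section Opt.
Variables (R : rcfType) (n : nat) (d : 'I_n -> R).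

Lemma argmin_set (S : {set 'I_n}) : S != set0 ->
  exists2 j, j \in S & forall k, k \in S -> d j <= d k.
Proof.
case/set0Pn => i0 hi0.
case: (@arg_minP _ _ _ i0 (mem S) d hi0) => j hj hmin.
by exists j => // k hk; apply: hmin.
Qed.

Lemma low_set p : (1 <= p)%N -> (p <= n)%N ->
  exists I : {set 'I_n}, exists mu : R,
    [/\ #|I| = p, (forall i, i \in I -> d i <= mu) &
        (forall j, j \notin I -> mu <= d j)].
Proof.
elim: p => [//|p IH] _ hpn.
case: p IH hpn => [|p] IH hpn.
  have : [set: 'I_n] != set0.
    by apply/set0Pn; exists (Ordinal hpn); rewrite inE.
  case/argmin_set => j _ hj.
  exists [set j], (d j); split; first by rewrite cards1.
    by move=> i; rewrite inE => /eqP ->.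
  by move=> k _; apply: hj; rewrite inE.
have [I [mu [hI hle hge]]] := IH isT (ltnW hpn).
have : ~: I != set0.
  apply/negP => /eqP h.
  have := cardsC I; rewrite h cards0 hI card_ord addn0 => e.
  by move: hpn; rewrite -e ltnn.
case/argmin_set => j; rewrite inE => jI hj.
exists (j |: I), (d j); split.
- by rewrite cardsU1 jI hI.
- move=> i; rewrite in_setU1 => /orP [/eqP -> //|iI].
  exact: le_trans (hle _ iI) (hge _ jI).
- by move=> k; rewrite in_setU1 negb_or => /andP [_ kI]; apply: hj; rewrite inE.
Qed.

Lemma opt (c : 'I_n -> R) (M : R) p : (1 <= p)%N -> (p <= n)%N ->
  (forall i, 0 <= c i) -> (forall i, c i <= M) ->
  \sum_i c i = p%:R * M ->
  (forall I : {set 'I_n}, #|I| = p -> 0 <= \sum_(i in I) d i) ->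
  0 <= \sum_i d i * c i.
Proof.
move=> hp1 hpn hc0 hcM hsum hd.
have [I [mu [hI hle hge]]] := @low_set p hp1 hpn.
have i0 : 'I_n by apply: (Ordinal (leq_trans hp1 hpn)).
have hM : 0 <= M by exact: le_trans (hc0 i0) (hcM i0).
rewrite (bigID (mem I)) /=.
have h1 : \sum_(i in I) (d i * M + mu * (c i - M)) <= \sum_(i in I) d i * c i.
  apply: ler_sum => i iI.
  have := hle _ iI; have := hcM i; nra.
have h2 : \sum_(i | i \notin I) mu * c i <= \sum_(i | i \notin I) d i * c i.
  apply: ler_sum => i iI.
  have := hge _ iI; have := hc0 i; nra.
have e1 : \sum_(i in I) (d i * M + mu * (c i - M)) =
   M * \sum_(i in I) d i + mu * (\sum_(i in I) c i) - mu * (p%:R * M).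
  under eq_bigr do rewrite mulrBr.
  rewrite big_split /= sumrB -mulr_suml -mulr_sumr sumr_const hI.
  rewrite -mulr_natl; ring.
have e2 : \sum_(i | i \notin I) mu * c i = mu * \sum_(i | i \notin I) c i.
  by rewrite mulr_sumr.
have e3 : \sum_(i in I) c i + \sum_(i | i \notin I) c i = p%:R * M.
  by rewrite -hsum [RHS](bigID (mem I)).
have hMs : 0 <= M * \sum_(i in I) d i by apply: mulr_ge0 => //; exact: hd.
have e4 : mu * (\sum_(i in I) c i) - mu * (p%:R * M) + mu * (\sum_(i | i \notin I) c i) = 0.
  by rewrite -e3; ring.
rewrite e1 in h1; rewrite e2 in h2.
lra.
Qed.
End Opt.

Section Gram.
Variables (R : rcfType) (n : nat).
Local Notation form := (extform R n).

Lemma wi_self k (g : form) S : wedge1 k (interior k g) S = if k \in S then g S else 0.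
Proof.
rewrite !ffunE; case: ifP => kS //.
by rewrite setD11 setD1K // sgnD1_self mulrA sgn_sq mul1r.
Qed.

Lemma trace_iota p (g : form) : is_pform p g ->
  \sum_(k < n) inner (interior k g) (interior k g) = p%:R * inner g g.
Proof.
move=> hg.
under eq_bigr do rewrite -adjoint'.
rewrite /inner exchange_big mulr_sumr; apply: eq_bigr => S _.
under eq_bigr do rewrite wi_self.
have -> : \sum_(k < n) g S * (if k \in S then g S else 0) = g S * (g S *+ #|S|).
  rewrite -mulr_sumr -big_mkcond /= sumr_const; congr (_ * (_ *+ _)).
case: (eqVneq #|S| p) => [->|h]; first by rewrite mulrnAr -mulr_natl.
by rewrite hg // !mul0r mulr0.
Qed.

Lemma gram_sum j k (g : form) :
  inner (interior k g) (interior j g) + inner (wedge1 j g) (wedge1 k g) =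
  (j == k)%:R * inner g g.
Proof.
rewrite -adjoint' adjoint /inner -big_split /= mulr_sumr; apply: eq_bigr => S _.
rewrite -mulrDr anticomm; case: eqP => _; rewrite ?mul1r ?mul0r ?mulr0 //.
Qed.
End Gram.


Lemma char_poly_conj (F : fieldType) m (P B : 'M[F]_m) : P \in unitmx ->
  char_poly (invmx P *m B *m P) = char_poly B.
Proof.
move=> hP; rewrite /char_poly /char_poly_mx.
have -> : 'X%:M - map_mx polyC (invmx P *m B *m P) =
  map_mx polyC (invmx P) *m ('X%:M - map_mx polyC B) *m map_mx polyC P.
  rewrite mulmxBr mulmxBl !map_mxM; congr (_ - _).
  rewrite mul_mx_scalar -scalemxAl -map_mxM mulVmx // map_mx1.
  by rewrite scalemx1.
rewrite !det_mulmx !det_map_mx mulrC mulrA -rmorphM -det_mulmx mulmxV //.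
by rewrite det1 rmorph1 mul1r.
Qed.

Section Spec.
Variables (R : rcfType) (n : nat) (X : finType).
Local Notation C := (R[i]).
Local Notation rc := (real_complex R).

Lemma quad (P : 'M[C]_n) (h : 'I_n -> X -> R) i :
  (P *m map_mx rc (\matrix_(j, k) (\sum_x h j x * h k x)) *m (P ^t* )%sesqui) i i =
  \sum_x (\sum_j P i j * rc (h j x)) * Num.conj (\sum_k P i k * rc (h k x)).
Proof.
rewrite mxE.
under eq_bigr => k _ do rewrite !mxE.
under eq_bigr => k _ do under eq_bigr => j _ do rewrite !mxE.
transitivity (\sum_x \sum_k \sum_j (P i j * rc (h j x)) * (Num.conj (P i k) * rc (h k x))).
  under eq_bigr => k _ do rewrite big_distrl /=.
  under eq_bigr => k _ do under eq_bigr => j _ do rewrite rmorph_sum big_distrr big_distrl /=.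
  under eq_bigr => k _ do rewrite exchange_big /=.
  rewrite exchange_big /=; apply: eq_bigr => x _; apply: eq_bigr => k _.
  apply: eq_bigr => j _; rewrite rmorphM /=; ring.
apply: eq_bigr => x _.
rewrite rmorph_sum big_distrr /=; apply: eq_bigr => k _.
rewrite big_distrl /=; apply: eq_bigr => j _.
have hcr : forall r : R, Num.conj (rc r) = rc r by move=> r; exact: conjc_real.
by rewrite rmorphM /= hcr.
Qed.

Lemma spec_main (A : 'M[R]_n) (h h' : 'I_n -> X -> R) (M : R) p :
  A^T = A -> p_psd p A -> (1 <= p)%N -> (p <= n)%N ->
  (forall j k, \sum_x h j x * h k x + \sum_x h' j x * h' k x = (j == k)%:R * M) ->
  \sum_k \sum_x h k x * h k x = p%:R * M ->
  0 <= \sum_j \sum_k A j k * \sum_x h k x * h j x.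
Proof.
move=> hsym [_ hpsd] hp1 hpn hGW htr.
pose G := \matrix_(j, k) \sum_x h j x * h k x.
pose W := \matrix_(j, k) \sum_x h' j x * h' k x.
pose Ac := map_mx rc A.
have hs : forall i j, A j i = A i j by move=> i j; rewrite -{1}hsym mxE.
have hAc : Ac \is hermsymmx.
  apply: realsym_hermsym.
    apply/is_hermitianmxP; rewrite expr0 scale1r; apply/matrixP => i j.
    by rewrite !mxE /= hs.
  by apply/mxOverP => i j; rewrite mxE; apply/complex_realP; exists (A i j).
set P := spectralmx Ac; set D := spectral_diag Ac.
have hU : P \is unitarymx := spectral_unitarymx Ac.
have hPu : P \in unitmx := spectral_unit Ac.
have hsp : Ac = invmx P *m diag_mx D *m P.
  by apply/orthomx_spectralP; exact: hermitian_normalmx.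
have hDr := hermitian_spectral_diag_real hAc.
pose d i := complex.Re (D 0 i).
have hDd : forall i, D 0 i = rc (d i).
  by move=> i; rewrite /d; apply/esym/RRe_real/(mxOverP hDr).
pose c i := (P *m map_mx rc G *m (P ^t* )%sesqui) i i.
pose cw i := (P *m map_mx rc W *m (P ^t* )%sesqui) i i.
have hc0 : forall i, 0 <= c i.
  by move=> i; rewrite /c quad; apply: sumr_ge0 => x _; apply: mul_conjC_ge0.
have hcw0 : forall i, 0 <= cw i.
  by move=> i; rewrite /cw quad; apply: sumr_ge0 => x _; apply: mul_conjC_ge0.
have hcM : forall i, c i + cw i = rc M.
  move=> i; rewrite /c /cw.
  transitivity ((P *m map_mx rc G *m (P ^t* )%sesqui + P *m map_mx rc W *m (P ^t* )%sesqui) i i).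
    by rewrite [RHS]mxE.
  rewrite -mulmxDl -mulmxDr -map_mxD.
  have -> : G + W = M%:M.
    by apply/matrixP => j k; rewrite !mxE hGW mulr_natl eq_sym.
  rewrite map_scalar_mx mul_mx_scalar -scalemxAl (unitarymxP hU) !mxE eqxx.
  by rewrite mulr1n mulr1.
have hcr : forall i, c i = rc (complex.Re (c i)).
  by move=> i; apply/esym/RRe_real/ger0_real/hc0.
have hcle : forall i, complex.Re (c i) <= M.
  move=> i; rewrite -lecR -hcr -(hcM i) lerDl; exact: hcw0.
have hcge : forall i, 0 <= complex.Re (c i).
  by move=> i; rewrite -lecR -hcr; exact: hc0.
have hPP : (P ^t* )%sesqui *m P = 1%:M.
  by rewrite -(invmx_unitary hU) mulVmx.
have htrc : \sum_i complex.Re (c i) = p%:R * M.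
  apply: complexI; rewrite rmorph_sum.
  transitivity (\sum_i c i); first by apply: eq_bigr => i _; exact/esym/hcr.
  rewrite /c -[\sum_i _]/(\tr (P *m map_mx rc G *m (P ^t* )%sesqui)).
  rewrite mxtrace_mulC mulmxA hPP mul1mx trace_map_mx; congr (rc _).
  by rewrite -htr /mxtrace; apply: eq_bigr => k _; rewrite mxE.
have hval : \sum_j \sum_k A j k * \sum_x h k x * h j x = \sum_i d i * complex.Re (c i).
  apply: complexI.
  have -> : \sum_j \sum_k A j k * \sum_x h k x * h j x = \tr (A *m G).
    by rewrite /mxtrace; apply: eq_bigr => j _; rewrite mxE; apply: eq_bigr => k _; rewrite mxE.
  rewrite -trace_map_mx map_mxM -/Ac hsp -!mulmxA mxtrace_mulC -mulmxA (invmx_unitary hU).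
  rewrite rmorph_sum /mxtrace; apply: eq_bigr => i _.
  by rewrite mul_diag_mx mxE -/(c i) hDd rmorphM /= -hcr.
have heig : eigenvalue_list A d.
  apply: (@map_poly_inj _ _ rc).
  rewrite map_char_poly -/Ac hsp char_poly_conj // char_poly_trig ?diag_mx_is_trig //.
  rewrite rmorph_prod; apply: eq_bigr => i _.
  by rewrite rmorphB /= map_polyX map_polyC /= !mxE eqxx mulr1n hDd.
rewrite hval; apply: (@opt R n d _ M p) => //.
exact: hpsd.
Qed.
End Spec.


Lemma range_sym (K : fieldType) m (Mt : 'M[K]_m) (v : 'rV_m) : Mt^T = Mt ->
  (forall x : 'rV_m, x *m Mt = 0 -> v *m x^T = 0) -> exists u, v = u *m Mt.
Proof.
move=> hs hv; apply/submxP; rewrite submxE; apply/eqP/matrixP => i l.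
rewrite ord1 !mxE.
have h1 : (col l (cokermx Mt))^T *m Mt = 0.
  by rewrite -[X in _ *m X = 0]hs -trmx_mul colE mulmxA mulmx_coker mul0mx trmx0.
have := hv _ h1; rewrite trmxK => /matrixP /(_ 0 0); rewrite !mxE => h2.
rewrite -[RHS]h2; by apply: eq_bigr => k _; rewrite !mxE.
Qed.

Section LA.
Variables (R : rcfType) (n : nat).
Local Notation form := (extform R n).
Local Notation N := #|{: {set 'I_n}}|.

Definition vec (f : form) : 'rV[R]_N := \row_i f (enum_val i).
Definition unvec (u : 'rV[R]_N) : form := [ffun S => u 0 (enum_rank S)].
Definition delta (T : {set 'I_n}) : form := [ffun S => (S == T)%:R].

Lemma vecK : cancel vec unvec.
Proof. by move=> f; apply/ffunP => S; rewrite ffunE mxE enum_rankK. Qed.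

Lemma unvecK : cancel unvec vec.
Proof. by move=> u; apply/rowP => i; rewrite mxE ffunE enum_valK. Qed.

Lemma sum_enum (F : {set 'I_n} -> R) : \sum_T F T = \sum_(i < N) F (enum_val i).
Proof.
by rewrite (reindex _ (onW_bij _ (enum_val_bij _))).
Qed.

Lemma wi_lin j k (g : form) S :
  wedge1 k (interior j g) S = \sum_T g T * wedge1 k (interior j (delta T)) S.
Proof.
rewrite !ffunE; under eq_bigr do rewrite !ffunE.
case: (k \in S); last by rewrite big1 // => T _; rewrite mulr0.
case: (j \in S :\ k); first by rewrite mulr0 big1 // => T _; rewrite !mulr0.
rewrite (bigD1 (j |: S :\ k)) //= big1 => [|T hT].
  by rewrite eqxx addr0 /=; ring.
by rewrite eq_sym (negbTE hT) !mulr0.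
Qed.

Lemma F_lin (A : 'M[R]_n) (g : form) S :
  Ftheta A g S = \sum_T g T * Ftheta A (delta T) S.
Proof.
rewrite ffunE; under eq_bigr do under eq_bigr do rewrite wi_lin.
under [RHS]eq_bigr do rewrite ffunE mulr_sumr.
rewrite [RHS]exchange_big; apply: eq_bigr => j _.
under [RHS]eq_bigr do rewrite mulr_sumr.
rewrite [RHS]exchange_big; apply: eq_bigr => k _.
rewrite mulr_sumr; apply: eq_bigr => T _; ring.
Qed.

Definition Mat (A : 'M[R]_n) : 'M[R]_N :=
  \matrix_(i, j) Ftheta A (delta (enum_val i)) (enum_val j).

Lemma vecF (A : 'M[R]_n) (g : form) : vec g *m Mat A = vec (Ftheta A g).
Proof.
apply/rowP => j; rewrite !mxE F_lin sum_enum; apply: eq_bigr => i _.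
by rewrite !mxE.
Qed.

Lemma inner_delta T (f : form) : inner (delta T) f = f T.
Proof.
rewrite /inner (bigD1 T) //= big1 => [|S hS]; first by rewrite ffunE eqxx mul1r addr0.
by rewrite ffunE (negbTE hS) mul0r.
Qed.

Lemma F_selfadj (A : 'M[R]_n) (h g : form) : A^T = A -> inner h (Ftheta A g) = inner (Ftheta A h) g.
Proof.
move=> hs; rewrite [RHS]inner_sym !inner_F [RHS]exchange_big.
apply: eq_bigr => j _; apply: eq_bigr => k _ /=.
by rewrite -{2}hs mxE inner_sym.
Qed.

Lemma Mat_sym (A : 'M[R]_n) : A^T = A -> (Mat A)^T = Mat A.
Proof.
move=> hs; apply/matrixP => i j; rewrite !mxE.
by rewrite -inner_delta F_selfadj // inner_sym inner_delta.
Qed.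

Lemma inner_vec (f g : form) : (vec f *m (vec g)^T) 0 0 = inner f g.
Proof. by rewrite mxE /inner sum_enum; apply: eq_bigr => i _; rewrite !mxE. Qed.

Lemma solve (A : 'M[R]_n) (f : form) : A^T = A ->
  (forall X : form, Ftheta A X = 0 -> inner f X = 0) ->
  exists g, Ftheta A g = f.
Proof.
move=> hs hX.
have [u hu] : exists u, vec f = u *m Mat A.
  apply: range_sym; first exact: Mat_sym.
  move=> x hx; apply/matrixP => a b; rewrite !ord1 -(unvecK x) inner_vec mxE.
  apply: hX; rewrite -[Ftheta A _]vecK -vecF unvecK hx.
  by apply/ffunP => S; rewrite !ffunE mxE.
exists (unvec u); by rewrite -[LHS]vecK -vecF unvecK -hu vecK.
Qed.
End LA.


Section Final.
Variables (R : rcfType) (n : nat).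
Local Notation form := (extform R n).

Lemma inner_ge0 (u : form) : 0 <= inner u u.
Proof. by apply: sumr_ge0 => S _; rewrite -expr2 sqr_ge0. Qed.

Lemma inner_eq0 (u : form) : inner u u = 0 -> forall S, u S = 0.
Proof.
move=> h S.
have h0 : forall T : {set 'I_n}, true -> 0 <= u T * u T by move=> T _; rewrite -expr2 sqr_ge0.
have := @psumr_eq0P _ _ _ _ h0 h S isT.
by move/eqP; rewrite mulf_eq0 orbb => /eqP.
Qed.

Lemma CS (u v : form) : inner u v <= Num.sqrt (inner u u) * Num.sqrt (inner v v).
Proof.
set a := inner u u; set b := inner v v; set c := inner u v.
have ha : 0 <= a := inner_ge0 u.
have hb : 0 <= b := inner_ge0 v.
have L : c ^+ 2 <= a * b.
  case: (eqVneq a 0) => [a0|an0].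
    have hu := @inner_eq0 u a0.
    have -> : c = 0 by rewrite /c /inner big1 // => S _; rewrite hu mul0r.
    by rewrite expr0n /= a0 mul0r.
  pose w : form := [ffun S => a * v S - c * u S].
  have hw := inner_ge0 w.
  have e : inner w w = a * (a * b - c ^+ 2).
    rewrite /inner; under eq_bigr do rewrite ffunE.
    transitivity (\sum_S (a ^+ 2 * (v S * v S) - (2 * a * c) * (u S * v S) + c ^+ 2 * (u S * u S))).
      by apply: eq_bigr => S _; ring.
    rewrite big_split /= sumrB -!mulr_sumr.
    rewrite -[\sum_i v i * v i]/b -[\sum_i u i * v i]/c -[\sum_i u i * u i]/a; ring.
  have ha' : 0 < a by rewrite lt_def an0 ha.
  rewrite e in hw; rewrite -subr_ge0; by rewrite pmulr_rge0 in hw.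
rewrite -sqrtrM // (le_trans (ler_norm c)) // -sqrtr_sqr ler_sqrt //.
exact: mulr_ge0.
Qed.
Lemma inner_projp p (f X : form) : is_pform p f -> inner f X = inner f (projp p X).
Proof.
move=> hf; apply: eq_bigr => S _; rewrite [projp p X S]ffunE.
by case: ifP => [_ //|/negbT hS]; rewrite hf // !mul0r.
Qed.
End Final.

Theorem lemma1p1 (R : rcfType) (n p : nat) (theta : 'M[R]_n) (tau : 'rV[R]_n)
  (hp1 : (1 <= p)%N) (hpn : (p <= n)%N)
  (hsym : theta^T = theta)
  (hpsd : p_psd p (theta - tau^T *m tau)) :
  (forall xi : extform R n, is_pform p.-1 xi -> in_ImF p theta (wedge_tau tau xi))
  /\
  (forall xi : extform R n, is_pform p.-1 xi ->
   forall f : extform R n, in_ImF p theta f ->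
   forall g : extform R n, in_ImF p theta g -> Ftheta theta g = f ->
     inner g (wedge_tau tau xi) <= Num.sqrt (inner g f) * fnorm xi)
  /\
  (forall xi : extform R n, is_pform p.-1 xi ->
   forall g : extform R n, in_ImF p theta g -> Ftheta theta g = wedge_tau tau xi ->
     inner g (wedge_tau tau xi) <= fnorm xi ^+ 2).
Proof.
set A := theta - tau^T *m tau.
have hsA : A^T = A by case: hpsd.
have pos : forall g : extform R n, is_pform p g -> 0 <= inner g (Ftheta A g).
  move=> g hg; rewrite inner_F.
  apply: (@spec_main R n _ A (fun j S => interior j g S) (fun j S => wedge1 j g S)
     (inner g g) p hsA hpsd hp1 hpn).
    move=> j k.
    have := gram_sum j k g; rewrite [inner (interior k g) _]inner_sym.
    by rewrite /inner.
  by rewrite -(trace_iota hg) /inner.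
have key : forall g : extform R n, is_pform p g ->
    inner (iota_v (tau 0) g) (iota_v (tau 0) g) <= inner g (Ftheta theta g).
  move=> g hg; rewrite (inner_F_split _ tau) lerDr; exact: pos.
have hwt : forall xi, wedge_tau tau xi = wedge_v (tau 0) xi by [].
have part1 : forall xi : extform R n, is_pform p.-1 xi -> in_ImF p theta (wedge_tau tau xi).
  move=> xi hxi; rewrite hwt.
  have hf := wedge_pform (tau 0) hp1 hxi.
  split => //.
  have [g0 hg0] : exists g0, Ftheta theta g0 = wedge_v (tau 0) xi.
    apply: solve => // X hX.
    pose Xp := projp p X.
    have hXp : Ftheta theta Xp = 0.
      rewrite /Xp F_proj hX; apply/ffunP => S; rewrite !ffunE; by case: ifP.
    have -> : inner (wedge_v (tau 0) xi) X = inner (wedge_v (tau 0) xi) Xp.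
      exact: inner_projp.
    have := key Xp (projp_pform X); rewrite hXp.
    have h00 : inner Xp 0 = 0.
      by rewrite /inner big1 // => S _; rewrite !ffunE mulr0.
    rewrite h00.
    move=> hle.
    have h0 : inner (iota_v (tau 0) Xp) (iota_v (tau 0) Xp) = 0.
      by apply/eqP; rewrite eq_le hle inner_ge0.
    rewrite inner_sym inner_wedge_v /inner big1 // => S _.
    by rewrite (inner_eq0 h0) mul0r.
  exists (projp p g0); split; first exact: projp_pform.
  by rewrite F_proj hg0 projp_id.
have part2 : forall xi : extform R n, is_pform p.-1 xi ->
   forall f : extform R n, in_ImF p theta f ->
   forall g : extform R n, in_ImF p theta g -> Ftheta theta g = f ->
     inner g (wedge_tau tau xi) <= Num.sqrt (inner g f) * fnorm xi.
  move=> xi hxi f hf g [hg _] hgf.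
  rewrite hwt inner_wedge_v; apply: (le_trans (CS _ _)).
  rewrite /fnorm ler_wpM2r ?sqrtr_ge0 // ler_sqrt; last first.
    by rewrite -hgf; apply: le_trans (key g hg); exact: inner_ge0.
  by rewrite -hgf; exact: key.
split => //; split => //.
move=> xi hxi g hg hgf.
have := part2 xi hxi _ (part1 xi hxi) g hg hgf.
set x := inner g _; set F := fnorm xi.
have hF : 0 <= F by rewrite /F /fnorm sqrtr_ge0.
case: (lerP x 0) => hx0 hx.
  by apply: le_trans hx0 _; rewrite exprn_ge0.
set s := Num.sqrt x.
have hs : 0 <= s by rewrite sqrtr_ge0.
have hss : s ^+ 2 = x by rewrite sqr_sqrtr // ltW.
rewrite -hss; case: (lerP s F) => hsF.
  by rewrite lerXn2r // nnegrE.
have : s ^+ 2 <= s * F by rewrite hss.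
nra.
Qed.
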